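(* Let $N\ge 3$ and $M\ge 2$ be integers, let $\theta\in\mathbb{R}$, and let $\mathbf{h}=[h_1,\dots,h_N]^T\in\mathbb{C}^{N}$ be such that $\mathbf{h}$ is not a scalar multiple of $\mathbf{a}(\theta)$. Let $\alpha,\beta\in\mathbb{C}$, $P>0$, $\tau\in[0,1]$, $\sigma_R>0$, $c_3\in\mathbb{C}\setminus\{0\}$, $L\ge 1$, and set $\gamma_1=P\tau$, $\gamma_2=\frac{(1-\tau)P}{N-2}$, $Q=\frac{\sigma_R^2}{2|c_3|^2L}$. With $\mathbf{A}(\theta)=\mathbf{b}(\theta)\mathbf{a}(\theta)^H$, $\dot{\mathbf{A}}(\theta)=\frac{d}{d\theta}\mathbf{A}(\theta)$ and $\mathbf{R}_x=\gamma_1\mathbf{t}_1\mathbf{t}_1^H+\gamma_2\sum_{i=3}^{N}\mathbf{t}_i\mathbf{t}_i^H$, define $$\mathrm{CRB}(\theta)=\frac{\sigma_R^2\,\mathrm{Tr}(\mathbf{A}^H\mathbf{A}\mathbf{R}_x)}{2|c_3|^2L\left(\mathrm{Tr}(\mathbf{A}^H\mathbf{A}\mathbf{R}_x)\,\mathrm{Tr}(\dot{\mathbf{A}}^H\dot{\mathbf{A}}\mathbf{R}_x)-|\mathrm{Tr}(\dot{\mathbf{A}}^H\mathbf{A}\mathbf{R}_x)|^2\right)}.$$ Then $$\mathrm{CRB}(\theta)=\frac{Q}{\gamma_1\|\mathbf{b}'\|^2N|\alpha|^2+\gamma_2M\left(\|\mathbf{a}'\|^2-\dfrac{\left(\sum_{i=1}^{N}-f_i't_i\right)^2+\left(\sum_{i=1}^{N}f_i'r_i\right)^2}{K-\frac{1}{N}(T^2+R^2)}\right)},$$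 where $\|\mathbf{b}'\|^2=\frac{\pi^2\cos^2(\theta)M(M^2-1)}{12}$ and $\|\mathbf{a}'\|^2=\frac{\pi^2\cos^2(\theta)N(N^2-1)}{12}$ are the squared norms of the derivatives of $\mathbf{b}(\theta)$ and $\mathbf{a}(\theta)$ with respect to $\theta$.
   Context: Steering vectors: $\mathbf{a}(\theta)\in\mathbb{C}^N$ has $i$-th entry $a_i=e^{-jf_i}$ with $f_i=\pi\sin(\theta)\frac{N-(2i-1)}{2}$, $i=1,\dots,N$; $\mathbf{b}(\theta)\in\mathbb{C}^M$ has $m$-th entry $e^{-j\pi\sin(\theta)\frac{M-(2m-1)}{2}}$, $m=1,\dots,M$. Here $f_i'=\frac{df_i}{d\theta}=\pi\cos(\theta)\frac{N-(2i-1)}{2}$. Define $\tilde{\mathbf{a}}=\mathbf{a}/\|\mathbf{a}\|$, $\tilde{\mathbf{h}}=\frac{\mathbf{h}-(\tilde{\mathbf{a}}^H\mathbf{h})\tilde{\mathbf{a}}}{\|\mathbf{h}-(\tilde{\mathbf{a}}^H\mathbf{h})\tilde{\mathbf{a}}\|}$, $\mathbf{t}_1=\alpha\tilde{\mathbf{a}}+\beta\tilde{\mathbf{h}}$, and let $\mathbf{t}_3,\dots,\mathbf{t}_N$ be an orthonormal basis of the orthogonal complement of $\mathrm{span}\{\tilde{\mathbf{a}},\tilde{\mathbf{h}}\}$ in $\mathbb{C}^N$. Scalar quantities (distinct from the vectors $\mathbf{t}_i$): writing $h_i=|h_i|e^{j\phi_i}$, $r_i=\mathrm{Re}(e^{jf_i}h_i)=|h_i|\cos(f_i+\phi_i)$,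 $t_i=\mathrm{Im}(e^{jf_i}h_i)=|h_i|\sin(f_i+\phi_i)$, $k_i=|h_i|^2$, $R=\sum_{i=1}^N r_i$, $T=\sum_{i=1}^N t_i$, $K=\sum_{i=1}^N k_i$. *)

(* Defs.v *)
From HB Require Import structures.
From mathcomp Require Import all_boot all_order all_algebra.
From mathcomp Require Import all_classical all_reals all_analysis.
From mathcomp Require Import complex.

Set Implicit Arguments.
Unset Strict Implicit.
Unset Printing Implicit Defensive.

Import Order.TTheory GRing.Theory Num.Theory.
Local Open Scope ring_scope.
Local Open Scope complex_scope.

Section Defs.
Variable R : realType.
Local Notation C := (R[i]).

Definition expj (x : R) : C := Complex (cos x) (sin x).

(* f_i for the 1-based index i = k+1 (k : 'I_N, 0-based):
   f_i = pi sin(theta) (N - (2i-1)) / 2 *)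
Definition fcoef (N : nat) (theta : R) (k : nat) : R :=
  pi * sin theta * ((N%:R - (2 * k.+1 - 1)%:R) / 2).

Definition fcoef' (N : nat) (theta : R) (k : nat) : R :=
  pi * cos theta * ((N%:R - (2 * k.+1 - 1)%:R) / 2).

Definition steer (N : nat) (theta : R) : 'cV[C]_N :=
  \col_(k < N) expj (- fcoef N theta k).

Definition adjmx (m n : nat) (X : 'M[C]_(m, n)) : 'M[C]_(n, m) :=
  (map_mx (@conjc R) X)^T.

Definition cdot (n : nat) (u v : 'cV[C]_n) : C := (adjmx u *m v) 0 0.

Definition cnorm (n : nat) (v : 'cV[C]_n) : C := sqrtc (cdot v v).

Definition cderive (f : R -> C) (x : R) : C :=
  Complex (derive1 (fun t => @complex.Re R (f t)) x) (derive1 (fun t => @complex.Im R (f t)) x).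

Definition Amx (M N : nat) (theta : R) : 'M[C]_(M, N) :=
  steer M theta *m adjmx (steer N theta).

Definition dAmx (M N : nat) (theta : R) : 'M[C]_(M, N) :=
  \matrix_(m < M, i < N) cderive (fun x => Amx M N x m i) theta.


Definition cabs2 (z : C) : R := complex.Re z ^+ 2 + complex.Im z ^+ 2.

Definition atil (N : nat) (theta : R) : 'cV[C]_N :=
  (cnorm (steer N theta))^-1 *: steer N theta.

Definition htil (N : nat) (theta : R) (h : 'cV[C]_N) : 'cV[C]_N :=
  let w := h - cdot (atil N theta) h *: atil N theta in (cnorm w)^-1 *: w.

Definition t1vec (N : nat) (theta : R) (h : 'cV[C]_N) (alpha beta : C) :=
  alpha *: atil N theta + beta *: htil theta h.

(* R_x = gamma1 t1 t1^H + gamma2 sum_{i=3}^N t_i t_i^H, where the vectors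
   t_3, ..., t_N are given as t : 'I_(N-2) -> C^N (t k stands for t_{k+3}) *)
Definition Rxmx (N : nat) (theta : R) (h : 'cV[C]_N) (alpha beta : C)
    (gamma1 gamma2 : R) (t : 'I_(N - 2) -> 'cV[C]_N) : 'M[C]_N :=
  gamma1%:C *: (t1vec theta h alpha beta *m adjmx (t1vec theta h alpha beta))
  + gamma2%:C *: \sum_(k < N - 2) (t k *m adjmx (t k)).

Definition CRBden (M N : nat) (theta : R) (Rx : 'M[C]_N) (c3 : C) (L : nat) : C :=
  let A := Amx M N theta in
  let dA := dAmx M N theta in
  2 * `|c3| ^+ 2 * L%:R *
  (\tr (adjmx A *m A *m Rx) * \tr (adjmx dA *m dA *m Rx)
   - `|\tr (adjmx dA *m A *m Rx)| ^+ 2).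

Definition CRB (M N : nat) (theta : R) (Rx : 'M[C]_N) (sigmaR : R) (c3 : C)
    (L : nat) : C :=
  let A := Amx M N theta in
  (sigmaR ^+ 2)%:C * \tr (adjmx A *m A *m Rx) / CRBden M theta Rx c3 L.

(* r_i = Re(e^{j f_i} h_i), t_i = Im(e^{j f_i} h_i), k_i = |h_i|^2
   (k : 'I_N is the 0-based index, i = k+1) *)
Definition rcoef (N : nat) (theta : R) (h : 'cV[C]_N) (k : 'I_N) : R :=
  complex.Re (expj (fcoef N theta k) * h k 0).
Definition tcoef (N : nat) (theta : R) (h : 'cV[C]_N) (k : 'I_N) : R :=
  complex.Im (expj (fcoef N theta k) * h k 0).
Definition kcoef (N : nat) (h : 'cV[C]_N) (k : 'I_N) : R := cabs2 (h k 0).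

End Defs.

(* Main.v *)
Require Import Defs.
From HB Require Import structures.
From mathcomp Require Import all_boot all_order all_algebra.
From mathcomp Require Import all_classical all_reals all_analysis.
From mathcomp Require Import complex.
From mathcomp Require Import ring lra.
Import Order.TTheory GRing.Theory Num.Theory.
Local Open Scope ring_scope.
Local Open Scope complex_scope.
Set Implicit Arguments.
Unset Strict Implicit.
Unset Printing Implicit Defensive.

Section Gen.
Variable F : comNzRingType.
Variable cj : {rmorphism F -> F}.
Hypothesis cjK : involutive cj.
Definition gadj m n (X : 'M[F]_(m, n)) : 'M[F]_(n, m) := (map_mx cj X)^T.
Definition gdot n (u v : 'cV[F]_n) : F := (gadj u *m v) 0 0.

Lemma gadjM m n p (A : 'M[F]_(m, n)) (B : 'M[F]_(n, p)) : gadj (A *m B) = gadj B *m gadj A.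
Proof. by rewrite /gadj map_mxM trmx_mul. Qed.
Lemma gadjD m n (A B : 'M[F]_(m, n)) : gadj (A + B) = gadj A + gadj B.
Proof. by rewrite /gadj map_mxD linearD. Qed.
Lemma gadjK m n (A : 'M[F]_(m, n)) : gadj (gadj A) = A.
Proof. by apply/matrixP => i j; rewrite /gadj !mxE cjK. Qed.

Lemma gtr m n (p r : 'cV[F]_m) (q s : 'cV[F]_n) (X : 'M[F]_n) :
  \tr (gadj (p *m gadj q) *m (r *m gadj s) *m X) = gdot p r * gdot s (X *m q).
Proof.
rewrite gadjM gadjK !mulmxA -(mulmxA q) (mx11_scalar (gadj p *m r)) mul_mx_scalar.
rewrite -!scalemxAl mxtraceZ -/(gdot p r); congr (_ * _).
rewrite -!mulmxA mxtrace_mulC /mxtrace big_ord1 /gdot !mulmxA.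
by rewrite !mxE.
Qed.

Lemma gtr_sum2 m n (p1 p2 : 'cV[F]_m) (q1 q2 : 'cV[F]_n) (X : 'M[F]_n) :
  \tr (gadj (p1 *m gadj q1 + p2 *m gadj q2) *m (p1 *m gadj q1 + p2 *m gadj q2) *m X) =
  gdot p1 p1 * gdot q1 (X *m q1) + gdot p1 p2 * gdot q2 (X *m q1)
  + (gdot p2 p1 * gdot q1 (X *m q2) + gdot p2 p2 * gdot q2 (X *m q2)).
Proof. by rewrite gadjD !mulmxDl !mulmxDr !mulmxDl !mxtraceD !gtr. Qed.

Lemma gtr_sum1 m n (p1 p2 r : 'cV[F]_m) (q1 q2 s : 'cV[F]_n) (X : 'M[F]_n) :
  \tr (gadj (p1 *m gadj q1 + p2 *m gadj q2) *m (r *m gadj s) *m X) =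
  gdot p1 r * gdot s (X *m q1) + gdot p2 r * gdot s (X *m q2).
Proof. by rewrite gadjD !mulmxDl mxtraceD !gtr. Qed.
End Gen.

Section S.
Variable R : realType.
Local Notation C := (R[i]).

Lemma D1 (f : R -> R) (x df : R) : is_derive x (1:R) f df -> derive1 f x = df.
Proof. by move=> H; rewrite derive1E; apply: derive.derive_val. Qed.

Lemma is_der_arg (c x : R) :
  is_derive x 1 (fun t => - (pi * sin t * c)) (- (pi * cos x * c)).
Proof.
have sE (a b : R) : a *: b = a * b := erefl.
have H := is_deriveN (is_deriveZ (pi * c) (is_derive_sin x)).
have -> : (fun t => - (pi * sin t * c)) = (- ((pi * c) \*: (sin : R -> R)))%R.
  by apply/funext => t /=; rewrite !fctE /= sE; ring.
have -> : (- (pi * cos x * c)) = (- ((pi * c) *: cos x)) by rewrite sE; ring.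
exact: H.
Qed.

Lemma is_der_cos (c x : R) :
  is_derive x 1 (fun t => cos (- (pi * sin t * c))) (sin (- (pi * sin x * c)) * (pi * cos x * c)).
Proof.
have H := @is_derive1_comp _ cos (fun t => - (pi * sin t * c)) x _ _ (is_derive_cos (- (pi * sin x * c))) (is_der_arg c x).
have -> : (sin (- (pi * sin x * c)) * (pi * cos x * c)) = (- sin (- (pi * sin x * c)) * - (pi * cos x * c)) by ring.
exact: H.
Qed.

Lemma is_der_sin (c x : R) :
  is_derive x 1 (fun t => sin (- (pi * sin t * c))) (cos (- (pi * sin x * c)) * - (pi * cos x * c)).
Proof.
exact: (@is_derive1_comp _ sin (fun t => - (pi * sin t * c)) x _ _ (is_derive_sin (- (pi * sin x * c))) (is_der_arg c x)).
Qed.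



Definition cc (N : nat) (k : nat) : R := ((N%:R - (2 * k.+1 - 1)%:R) / 2).

Definition dsteer N (th : R) : 'cV[C]_N :=
  \col_(k < N) Complex (sin (- fcoef N th k) * fcoef' N th k) (- cos (- fcoef N th k) * fcoef' N th k).

Lemma ReAmx M N (m : 'I_M) (i : 'I_N) :
  (fun x : R => @complex.Re R (Amx M N x m i)) = (fun x : R => cos (- (pi * sin x * cc M m)) * cos (- (pi * sin x * cc N i)) - sin (- (pi * sin x * cc M m)) * - sin (- (pi * sin x * cc N i))).
Proof. by apply/funext => x; rewrite /Amx /adjmx !mxE big_ord1 !mxE /=. Qed.

Lemma ImAmx M N (m : 'I_M) (i : 'I_N) :
  (fun x : R => @complex.Im R (Amx M N x m i)) = (fun x : R => cos (- (pi * sin x * cc M m)) * - sin (- (pi * sin x * cc N i)) + sin (- (pi * sin x * cc M m)) * cos (- (pi * sin x * cc N i))).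
Proof. by apply/funext => x; rewrite /Amx /adjmx !mxE big_ord1 !mxE /=. Qed.

Lemma dAmxE M N th : dAmx M N th = dsteer M th *m adjmx (steer N th) + steer M th *m adjmx (dsteer N th).
Proof.
apply/matrixP => m i; rewrite /dAmx !mxE /cderive ReAmx ImAmx.
have E1 := @D1 _ _ _ (is_deriveB (is_deriveM (is_der_cos (cc M m) th) (is_der_cos (cc N i) th))
     (is_deriveM (is_der_sin (cc M m) th) (is_deriveN (is_der_sin (cc N i) th)))).
have E2 := @D1 _ _ _ (is_deriveD (is_deriveM (is_der_cos (cc M m) th) (is_deriveN (is_der_sin (cc N i) th)))
     (is_deriveM (is_der_sin (cc M m) th) (is_der_cos (cc N i) th))).
rewrite /= in E1 E2.
rewrite E1 E2.
rewrite /adjmx ?mxE ?big_ord1 ?mxE.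
apply/eqP; rewrite eq_complex /= /fcoef /fcoef' -/(cc M m) -/(cc N i).
have sE (a b : R) : a *: b = a * b := erefl.
rewrite !sE ?fctE ?sE; apply/andP; split; apply/eqP; ring.
Qed.

Local Notation cj := (@conjc R).

Lemma cdotE n (u v : 'cV[C]_n) : cdot u v = \sum_i cj (u i 0) * v i 0.
Proof. by rewrite /cdot /adjmx mxE; apply: eq_bigr => i _; rewrite !mxE. Qed.

Lemma cdotDr n (u v w : 'cV[C]_n) : cdot u (v + w) = cdot u v + cdot u w.
Proof. rewrite !cdotE -big_split; apply: eq_bigr => i _; rewrite mxE; exact: mulrDr. Qed.

Lemma cdotBr n (u v w : 'cV[C]_n) : cdot u (v - w) = cdot u v - cdot u w.
Proof. rewrite !cdotE -sumrB; apply: eq_bigr => i _; rewrite !mxE; exact: mulrBr. Qed.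

Lemma cdotZr n (u v : 'cV[C]_n) c : cdot u (c *: v) = c * cdot u v.
Proof. rewrite !cdotE mulr_sumr; apply: eq_bigr => i _; rewrite mxE; ring. Qed.

Lemma cdotC n (u v : 'cV[C]_n) : cdot v u = cj (cdot u v).
Proof. rewrite !cdotE rmorph_sum; apply: eq_bigr => i _; rewrite rmorphM /= conjcK mulrC. by []. Qed.

Lemma cdotZl n (u v : 'cV[C]_n) c : cdot (c *: u) v = cj c * cdot u v.
Proof. by rewrite cdotC cdotZr rmorphM /= -cdotC. Qed.

Lemma cdot_sumr n m (u : 'cV[C]_n) (F : 'I_m -> 'cV[C]_n) :
  cdot u (\sum_k F k) = \sum_k cdot u (F k).
Proof.
elim/big_rec2: _ => [|k y v _ <-]; last by rewrite cdotDr.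
by rewrite cdotE big1 // => i _; rewrite mxE mulr0.
Qed.

Lemma adjmxM m n p (A : 'M[C]_(m, n)) (B : 'M[C]_(n, p)) :
  adjmx (A *m B) = adjmx B *m adjmx A.
Proof. by rewrite /adjmx (map_mxM conjc) trmx_mul. Qed.

Lemma adjmxD m n (A B : 'M[C]_(m, n)) : adjmx (A + B) = adjmx A + adjmx B.
Proof. by rewrite /adjmx (map_mxD conjc) linearD. Qed.

Lemma adjmxK m n (A : 'M[C]_(m, n)) : adjmx (adjmx A) = A.
Proof. by apply/matrixP => i j; rewrite /adjmx !mxE conjcK. Qed.

Lemma tr_lemma m n (p r : 'cV[C]_m) (q s : 'cV[C]_n) (X : 'M[C]_n) :
  \tr (adjmx (p *m adjmx q) *m (r *m adjmx s) *m X) = cdot p r * cdot s (X *m q).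
Proof. exact: (@gtr _ conjc (@conjcK R)). Qed.
Lemma tr_sum2 m n (p1 p2 : 'cV[C]_m) (q1 q2 : 'cV[C]_n) (X : 'M[C]_n) :
  \tr (adjmx (p1 *m adjmx q1 + p2 *m adjmx q2) *m (p1 *m adjmx q1 + p2 *m adjmx q2) *m X) =
  cdot p1 p1 * cdot q1 (X *m q1) + cdot p1 p2 * cdot q2 (X *m q1)
  + (cdot p2 p1 * cdot q1 (X *m q2) + cdot p2 p2 * cdot q2 (X *m q2)).
Proof. exact: (@gtr_sum2 _ conjc (@conjcK R)). Qed.
Lemma tr_sum1 m n (p1 p2 r : 'cV[C]_m) (q1 q2 s : 'cV[C]_n) (X : 'M[C]_n) :
  \tr (adjmx (p1 *m adjmx q1 + p2 *m adjmx q2) *m (r *m adjmx s) *m X) =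
  cdot p1 r * cdot s (X *m q1) + cdot p2 r * cdot s (X *m q2).
Proof. exact: (@gtr_sum1 _ conjc (@conjcK R)). Qed.
Lemma outer_mul n (p q v : 'cV[C]_n) : (p *m adjmx q) *m v = cdot q v *: p.
Proof. by rewrite -mulmxA (mx11_scalar (adjmx q *m v)) mul_mx_scalar. Qed.


Lemma sumC n (F : 'I_n -> C) :
  \sum_i F i = Complex (\sum_i complex.Re (F i)) (\sum_i complex.Im (F i)).
Proof.
elim: n F => [|n IH] F; first by rewrite !big_ord0.
by rewrite !big_ord_recr IH; case: (F ord_max).
Qed.

Lemma sum_quad m (a b c : R) :
  \sum_(k < m) (a + b * k%:R + c * k%:R ^+ 2) =
  a * m%:R + b * (m%:R * (m%:R - 1) / 2) + c * (m%:R * (m%:R - 1) * (2 * m%:R - 1) / 6).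
Proof.
elim: m => [|m IH]; first by rewrite big_ord0 !mul0r !mulr0 !addr0.
rewrite big_ord_recr /= IH -addn1 natrD /=.
have h2 : (2 : R) != 0 by rewrite pnatr_eq0.
have h6 : (6 : R) != 0 by rewrite pnatr_eq0.
by field.
Qed.

Lemma ccE n (k : nat) : cc n k = (n%:R - 1) / 2 - k%:R.
Proof.
rewrite /cc; have -> : (2 * k.+1 - 1 = (2 * k) + 1)%N by rewrite mulnS addnC addnS subn1 /= addn1.
rewrite natrD natrM /=.
have h2 : (2 : R) != 0 by rewrite pnatr_eq0.
by field.
Qed.

Lemma sum_cc n : \sum_(k < n) cc n k = 0.
Proof.
rewrite (eq_bigr (fun k : 'I_n => (n%:R - 1) / 2 + (-1) * (k : nat)%:R + 0 * (k : nat)%:R ^+ 2)).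
  rewrite sum_quad.
  have h2 : (2 : R) != 0 by rewrite pnatr_eq0.
  by field.
by move=> k _; rewrite ccE; ring.
Qed.

Lemma sum_cc2 n : \sum_(k < n) cc n k ^+ 2 = n%:R * (n%:R ^+ 2 - 1) / 12.
Proof.
rewrite (eq_bigr (fun k : 'I_n => ((n%:R - 1) / 2) ^+ 2 + (- (n%:R - 1)) * (k : nat)%:R + 1 * (k : nat)%:R ^+ 2)).
  rewrite sum_quad.
  have h2 : (2 : R) != 0 by rewrite pnatr_eq0.
  have h6 : (6 : R) != 0 by rewrite pnatr_eq0.
  have h12 : (12 : R) != 0 by rewrite pnatr_eq0.
  by field.
move=> k _; rewrite ccE; have h2 : (2 : R) != 0 by rewrite pnatr_eq0.
by field.
Qed.

Lemma cdot_ss n (th : R) : cdot (steer n th) (steer n th) = n%:R.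
Proof.
rewrite cdotE (eq_bigr (fun _ => 1)) ?sumr_const ?card_ord //.
move=> k _; rewrite !mxE /=; apply/eqP; rewrite eq_complex /=.
have := cos2Dsin2 (- fcoef n th k).
move=> H; apply/andP; split; apply/eqP; [rewrite -H|]; ring.
Qed.

Lemma cdot_sds n (th : R) : cdot (steer n th) (dsteer n th) = 0.
Proof.
rewrite cdotE sumC.
have := sum_cc n => Hs.
apply/eqP; rewrite eq_complex /=; apply/andP; split; apply/eqP.
  by rewrite big1 // => k _; rewrite !mxE /=; ring.
rewrite (eq_bigr (fun k : 'I_n => - (pi * cos th) * cc n k)).
  by rewrite -mulr_sumr Hs mulr0.
move=> k _; rewrite !mxE /=.
have := cos2Dsin2 (- fcoef n th k) => H.
rewrite /fcoef' -/(cc n k).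
transitivity (- (pi * cos th * cc n k) * (cos (- fcoef n th k) ^+ 2 + sin (- fcoef n th k) ^+ 2)); first ring.
by rewrite H; ring.
Qed.

Lemma cdot_dss n (th : R) : cdot (dsteer n th) (steer n th) = 0.
Proof. by rewrite cdotC cdot_sds rmorph0. Qed.

Lemma cdot_dd n (th : R) : cdot (dsteer n th) (dsteer n th) =
  (pi ^+ 2 * cos th ^+ 2 * n%:R * (n%:R ^+ 2 - 1) / 12)%:C.
Proof.
rewrite cdotE sumC.
apply/eqP; rewrite eq_complex /=; apply/andP; split; apply/eqP; last first.
  by rewrite big1 // => k _; rewrite !mxE /=; ring.
rewrite (eq_bigr (fun k : 'I_n => (pi * cos th) ^+ 2 * cc n k ^+ 2)).
  by rewrite -mulr_sumr sum_cc2; ring.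
move=> k _; rewrite !mxE /=.
have := cos2Dsin2 (- fcoef n th k) => H.
rewrite /fcoef' -/(cc n k).
transitivity ((pi * cos th * cc n k) ^+ 2 * (cos (- fcoef n th k) ^+ 2 + sin (- fcoef n th k) ^+ 2)); first ring.
by rewrite H; ring.
Qed.


Lemma cdot_self n (v : 'cV[C]_n) : cdot v v = (\sum_i cabs2 (v i 0))%:C.
Proof.
rewrite cdotE sumC; apply/eqP; rewrite eq_complex /=; apply/andP; split; apply/eqP.
  by apply: eq_bigr => i _; case: (v i 0) => x y /=; rewrite /cabs2 /=; ring.
by rewrite big1 // => i _; case: (v i 0) => x y /=; ring.
Qed.

Lemma cabs2_ge0 (z : C) : 0 <= cabs2 z.
Proof. by rewrite /cabs2 addr_ge0 // sqr_ge0. Qed.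

Lemma cdot_self0 n (v : 'cV[C]_n) : \sum_i cabs2 (v i 0) = 0 -> v = 0.
Proof.
move=> H; have := psumr_eq0P (fun i _ => cabs2_ge0 (v i 0)) H => {}H.
apply/matrixP => i j; rewrite (ord1 j) mxE; have := H i isT.
case: (v i 0) => x y; rewrite /cabs2 /= => E.
have hx : x = 0 by nra.
have hy : y = 0 by nra.
by rewrite hx hy.
Qed.

Definition sr (N : nat) : R := Num.sqrt (N%:R : R).

Lemma sr_sq N : sr N * sr N = N%:R.
Proof. by rewrite -expr2 sqr_sqrtr // ler0n. Qed.

Lemma sr_neq0 {N} : (0 < N)%N -> sr N != 0.
Proof. by move=> H; rewrite /sr sqrtr_eq0 -ltNge ltr0n. Qed.

Lemma sqrtc_real (x : R) : 0 <= x -> sqrtc (x%:C) = (Num.sqrt x)%:C.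
Proof. by move=> H; rewrite sqrtc_sqrtr ?ler0c. Qed.

Lemma cnorm_steer N (th : R) : cnorm (steer N th) = (sr N)%:C.
Proof. by rewrite /cnorm cdot_ss -(rmorph_nat (real_complex R) N) sqrtc_real ?ler0n. Qed.

Lemma atilE N (th : R) : atil N th = ((sr N)^-1)%:C *: steer N th.
Proof. by rewrite /atil cnorm_steer fmorphV. Qed.

Lemma steerE N (th : R) : (0 < N)%N -> steer N th = (sr N)%:C *: atil N th.
Proof.
move=> H; rewrite atilE scalerA -rmorphM mulfV ?sr_neq0 //.
by rewrite rmorph1 scale1r.
Qed.

Lemma cdot_at_at N (th : R) : (0 < N)%N -> cdot (atil N th) (atil N th) = 1.
Proof.
move=> HN; rewrite atilE cdotZl cdotZr cdot_ss conjc_real.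
rewrite -(rmorph_nat (real_complex R) N) -!rmorphM -(rmorph1 (real_complex R)); congr (_%:C).
rewrite -sr_sq; have := sr_neq0 HN => h0; by field.
Qed.

Lemma cdot_at_da N (th : R) : cdot (atil N th) (dsteer N th) = 0.
Proof. by rewrite atilE cdotZl cdot_sds mulr0. Qed.

Lemma cdot_da_at N (th : R) : cdot (dsteer N th) (atil N th) = 0.
Proof. by rewrite cdotC cdot_at_da rmorph0. Qed.

Lemma cdotBl n (u v w : 'cV[C]_n) : cdot (u - v) w = cdot u w - cdot v w.
Proof. by rewrite cdotC cdotBr rmorphB /= -!cdotC. Qed.

Lemma cdotDl n (u v w : 'cV[C]_n) : cdot (u + v) w = cdot u w + cdot v w.
Proof. by rewrite cdotC cdotDr rmorphD /= -!cdotC. Qed.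


Definition wv {N} (th : R) (h : 'cV[C]_N) := h - cdot (atil N th) h *: atil N th.
Definition ww {N} (th : R) (h : 'cV[C]_N) := \sum_i cabs2 (wv th h i 0).

Lemma cdot_at_w {N} (th : R) h : (0 < N)%N -> cdot (atil N th) (wv th h) = 0.
Proof. by move=> HN; rewrite /wv cdotBr cdotZr cdot_at_at // mulr1 subrr. Qed.

Lemma cdot_w_at {N} (th : R) h : (0 < N)%N -> cdot (wv th h) (atil N th) = 0.
Proof. by move=> HN; rewrite cdotC cdot_at_w // rmorph0. Qed.

Lemma ww_val {N} (th : R) h : (0 < N)%N ->
  (ww th h)%:C = cdot h h - cj (cdot (atil N th) h) * cdot (atil N th) h.
Proof.
move=> HN; rewrite /ww -cdot_self {1}/wv cdotBr cdotZr cdot_w_at // mulr0 subr0.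
by rewrite /wv cdotBl cdotZl.
Qed.

Lemma ww_ge0 {N} (th : R) (h : 'cV[C]_N) : 0 <= ww th h.
Proof. by rewrite /ww sumr_ge0 // => i _; exact: cabs2_ge0. Qed.

Lemma ww_neq0 {N} (th : R) (h : 'cV[C]_N) : (0 < N)%N ->
  ~ (exists c : C, h = c *: steer N th) -> ww th h != 0.
Proof.
move=> HN Hh; apply/eqP => /cdot_self0 E; apply: Hh.
exists (cdot (atil N th) h * ((sr N)^-1)%:C).
by rewrite -scalerA -atilE; apply/eqP; rewrite -subr_eq0; apply/eqP; exact: E.
Qed.

Lemma htilE {N} (th : R) (h : 'cV[C]_N) : htil th h = ((Num.sqrt (ww th h))^-1)%:C *: wv th h.
Proof. by rewrite /htil -/(wv th h) /cnorm cdot_self -/(ww th h) sqrtc_real ?ww_ge0 // fmorphV. Qed.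

Lemma cdot_ht_v {N} (th : R) (h v : 'cV[C]_N) : cdot (htil th h) v = ((Num.sqrt (ww th h))^-1)%:C * cdot (wv th h) v.
Proof. by rewrite htilE cdotZl conjc_real. Qed.

Lemma cdot_ht_ht {N} (th : R) (h : 'cV[C]_N) : (0 < N)%N ->
  ~ (exists c : C, h = c *: steer N th) -> cdot (htil th h) (htil th h) = 1.
Proof.
move=> HN Hh; rewrite cdot_ht_v htilE cdotZr cdot_self -/(ww th h).
rewrite -!rmorphM -(rmorph1 (real_complex R)); congr (_%:C).
have h0 := @ww_neq0 N th h HN Hh;  have hp := ww_ge0 th h.
have e := sqr_sqrtr hp; rewrite expr2 in e.
have hs : Num.sqrt (ww th h) != 0 by rewrite sqrtr_eq0 -ltNge lt_def h0 hp.
by rewrite -{3}e; field.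
Qed.

Lemma cdot_at_ht {N} (th : R) h : (0 < N)%N -> cdot (atil N th) (htil th h) = 0.
Proof. by move=> HN; rewrite htilE cdotZr cdot_at_w // mulr0. Qed.

Lemma cdot_ht_at {N} (th : R) h : (0 < N)%N -> cdot (htil th h) (atil N th) = 0.
Proof. by move=> HN; rewrite cdotC cdot_at_ht // rmorph0. Qed.


Lemma Rx_form N (th : R) (h : 'cV[C]_N) al be g1 g2 (t : 'I_(N - 2) -> 'cV[C]_N) u v :
  cdot u (Rxmx th h al be g1 g2 t *m v) =
  g1%:C * (cdot u (t1vec th h al be) * cdot (t1vec th h al be) v)
  + g2%:C * \sum_k cdot u (t k) * cdot (t k) v.
Proof.
rewrite /Rxmx mulmxDl -!scalemxAl outer_mul mulmx_suml cdotDr !cdotZr cdot_sumr ?cdotZr.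
rewrite [cdot u _ * cdot _ v]mulrC; congr (_ + _ * _).
by apply: eq_bigr => k _; rewrite outer_mul cdotZr mulrC.
Qed.

Lemma normsq (x : C) : `|x| ^+ 2 = x * cj x.
Proof. by rewrite normcE sqr_sqrtc. Qed.

Lemma cj_expjN (x : R) : cj (expj (- x)) = expj x.
Proof. by rewrite /expj /= cosN sinN opprK. Qed.

Lemma cdot_a_h N (th : R) (h : 'cV[C]_N) :
  cdot (steer N th) h = Complex (\sum_k rcoef th h k) (\sum_k tcoef th h k).
Proof.
rewrite cdotE sumC; congr Complex; apply: eq_bigr => k _; by rewrite !mxE cj_expjN.
Qed.

Lemma cdot_da_h N (th : R) (h : 'cV[C]_N) :
  cdot (dsteer N th) h = Complex (\sum_(k < N) - fcoef' N th k * tcoef th h k)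
                                 (\sum_(k < N) fcoef' N th k * rcoef th h k).
Proof.
rewrite cdotE sumC; congr Complex; apply: eq_bigr => k _;
 rewrite !mxE /rcoef /tcoef /expj /= cosN sinN; case: (h k 0) => p q /=; ring.
Qed.

Lemma cabs2E (x : C) : x * cj x = (cabs2 x)%:C.
Proof. by case: x => p q; apply/eqP; rewrite eq_complex /= /cabs2 /=; apply/andP; split; apply/eqP; ring. Qed.


Lemma cjM (a b : C) : cj (a * b) = cj a * cj b. Proof. exact: rmorphM. Qed.
Lemma cjn n : cj (n%:R) = n%:R. Proof. exact: conjc_nat. Qed.

Lemma cj_prod4 (m : nat) (g s : R) (a z : C) :
  cj (m%:R * (g%:C * (s%:C * a * z))) = m%:R * (g%:C * (s%:C * cj a * cj z)).
Proof. by rewrite !cjM cjn !conjc_real. Qed.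

Lemma cjmul (x a b : R) :
  cj (x%:C * Complex a b) * (x%:C * Complex a b) = (x ^+ 2 * (a ^+ 2 + b ^+ 2))%:C.
Proof. apply/eqP; rewrite eq_complex /=; apply/andP; split; apply/eqP; ring. Qed.

Lemma cabs2C (z : C) : `|z| ^+ 2 = (cabs2 z)%:C.
Proof. by rewrite -add_Re2_Im2. Qed.


Lemma final_alg (s2 c X B : R) (M L : nat) :
  (2 * c%:C * L%:R * (M%:R * X%:C * B%:C) != 0 :> C) ->
  s2%:C * (M%:R * X%:C) / (2 * c%:C * L%:R * (M%:R * X%:C * B%:C)) = (s2 / (2 * c * L%:R) / B)%:C.
Proof.
rewrite !mulf_eq0 !negb_or => /andP[/andP[/andP[h2 hc] hL] /andP[/andP[hM hX] hB]].
rewrite !fmorph_div !rmorphM !rmorph_nat.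
by field; apply/and5P; split.
Qed.


Lemma cjmul' (x a b : R) :
  cj (x%:C * cj (Complex a b)) * (x%:C * cj (Complex a b)) = (x ^+ 2 * (a ^+ 2 + b ^+ 2))%:C.
Proof. apply/eqP; rewrite eq_complex /=; apply/andP; split; apply/eqP; ring. Qed.

Lemma HB_alg (nb g2 na Y Xr : R) (M : nat) :
  nb%:C * Xr%:C + M%:R * g2%:C * (na%:C - Y%:C) = (nb * Xr + g2 * M%:R * (na - Y))%:C.
Proof. by rewrite rmorphD !rmorphM rmorphB rmorph_nat; ring. Qed.

End S.


Theorem lemma1 (R : realType) (N M : nat) (theta : R) (h : 'cV[R[i]]_N)
    (alpha beta : R[i]) (P tau sigmaR : R) (c3 : R[i]) (L : nat)
    (t : 'I_(N - 2) -> 'cV[R[i]]_N) :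
  (3 <= N)%N -> (2 <= M)%N ->
  ~ (exists c : R[i], h = c *: steer N theta) ->
  0 < P -> 0 <= tau <= 1 -> 0 < sigmaR -> c3 != 0 -> (1 <= L)%N ->
  (* t_3, ..., t_N : an orthonormal basis of the orthogonal complement of
     span{a~, h~} *)
  (forall k l, cdot (t k) (t l) = (k == l)%:R) ->
  (forall k, cdot (atil N theta) (t k) = 0) ->
  (forall k, cdot (htil theta h) (t k) = 0) ->
  (forall v : 'cV[R[i]]_N, cdot (atil N theta) v = 0 ->
     cdot (htil theta h) v = 0 ->
     exists c : 'I_(N - 2) -> R[i], v = \sum_(k < N - 2) c k *: t k) ->
  let gamma1 := P * tau in
  let gamma2 := (1 - tau) * P / (N - 2)%:R in
  let Q := sigmaR ^+ 2 / (2 * cabs2 c3 * L%:R) in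
  let Rx := Rxmx theta h alpha beta gamma1 gamma2 t in
  (* CRB(theta) is well defined (its denominator is nonzero) *)
  CRBden M theta Rx c3 L != 0 ->
  let nb2 := pi ^+ 2 * cos theta ^+ 2 * M%:R * (M%:R ^+ 2 - 1) / 12 in
  let na2 := pi ^+ 2 * cos theta ^+ 2 * N%:R * (N%:R ^+ 2 - 1) / 12 in
  let Rs := \sum_(k < N) rcoef theta h k in
  let Ts := \sum_(k < N) tcoef theta h k in
  let Ks := \sum_(k < N) kcoef h k in
  let S1 := \sum_(k < N) - fcoef' N theta k * tcoef theta h k in
  let S2 := \sum_(k < N) fcoef' N theta k * rcoef theta h k in
  CRB M theta Rx sigmaR c3 L =
  (Q / (gamma1 * nb2 * N%:R * cabs2 alpha
        + gamma2 * M%:R * (na2 - (S1 ^+ 2 + S2 ^+ 2)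
                                  / (Ks - (N%:R)^-1 * (Ts ^+ 2 + Rs ^+ 2)))))%:C.
Proof.
move=> HN HM Hh HP Htau Hs Hc3 HL Hto Hat Hht Hspan gamma1 gamma2 Q Rx Hden nb2 na2 Rs Ts Ks S1 S2.
have HN0 : (0 < N)%N by apply: leq_trans HN.
have Hsa v : cdot (steer N theta) v = (sr R N)%:C * cdot (atil N theta) v by rewrite steerE // cdotZl conjc_real.
have Ht1at : cdot (atil N theta) (t1vec theta h alpha beta) = alpha.
  by rewrite /t1vec cdotDr (cdotZr _ _ alpha) (cdotZr _ _ beta) cdot_at_at // cdot_at_ht // mulr0 addr0 mulr1.
have Hat1 : cdot (steer N theta) (t1vec theta h alpha beta) = (sr R N)%:C * alpha by rewrite Hsa Ht1at.
have Ht1a : cdot (t1vec theta h alpha beta) (steer N theta) = (sr R N)%:C * conjc alpha.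
 by rewrite cdotC Hat1 rmorphM /= oppr0.
have Hatk k : cdot (steer N theta) (t k) = 0 by rewrite Hsa Hat mulr0.
have Htka k : cdot (t k) (steer N theta) = 0 by rewrite cdotC Hatk rmorph0.
set z := cdot (t1vec theta h alpha beta) (dsteer N theta); set y := cdot (htil theta h) (dsteer N theta).
have Hdat1 : cdot (dsteer N theta) (t1vec theta h alpha beta) = conjc z by rewrite cdotC.
have HS : \sum_k cdot (dsteer N theta) (t k) * cdot (t k) (dsteer N theta) = cdot (dsteer N theta) (dsteer N theta) - conjc y * y.
  have Hht1 : cdot (htil theta h) (htil theta h) = 1 by apply: cdot_ht_ht.
  have [c Hc] : exists c : 'I_(N - 2) -> R[i], dsteer N theta - y *: htil theta h = \sum_k c k *: t k.
    apply: Hspan.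
      by rewrite cdotBr cdotZr cdot_at_da cdot_at_ht // mulr0 subr0.
    by rewrite cdotBr cdotZr Hht1 mulr1 subrr.
  have Hda : dsteer N theta = \sum_k c k *: t k + y *: htil theta h by rewrite -Hc subrK.
  have Htk k : cdot (t k) (dsteer N theta) = c k.
    rewrite Hda cdotDr cdotZr (cdotC (htil theta h)) Hht rmorph0 mulr0 addr0 cdot_sumr.
    rewrite (bigD1 k) //= cdotZr Hto eqxx mulr1 big1 ?addr0 // => l hl.
    by rewrite cdotZr Hto eq_sym (negbTE hl) mulr0.
  have Hdtk k : cdot (dsteer N theta) (t k) = conjc (c k) by rewrite cdotC Htk.
  rewrite (eq_bigr (fun k => c k * conjc (c k))); last by move=> k _; rewrite Hdtk Htk mulrC.
  rewrite (congr1 (cdot (dsteer N theta)) Hda) cdotDr cdotZr (cdotC (htil theta h)) -/y cdot_sumr.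
  rewrite (eq_bigr (fun k => c k * conjc (c k)) (F1 := fun k => cdot (dsteer N theta) (c k *: t k))); last by move=> k _; rewrite cdotZr Hdtk.
  by rewrite mulrC addrK.
have HRaa : cdot (steer N theta) (Rx *m (steer N theta)) = gamma1%:C * ((sr R N)%:C * alpha * ((sr R N)%:C * conjc alpha)).
  rewrite Rx_form Hat1 Ht1a big1 ?mulr0 ?addr0 // => k _; by rewrite Hatk mul0r.
have HRad : cdot (steer N theta) (Rx *m (dsteer N theta)) = gamma1%:C * ((sr R N)%:C * alpha * z).
  rewrite Rx_form Hat1 -/z big1 ?mulr0 ?addr0 // => k _; by rewrite Hatk mul0r.
have HRdd : cdot (dsteer N theta) (Rx *m (dsteer N theta)) = gamma1%:C * (conjc z * z) + gamma2%:C * (cdot (dsteer N theta) (dsteer N theta) - conjc y * y).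
  by rewrite Rx_form Hdat1 -/z HS.
unfold CRB, CRBden; cbv zeta.
have T1E : \tr (adjmx (Amx M N theta) *m Amx M N theta *m Rx) = M%:R * (gamma1%:C * ((sr R N)%:C * alpha * ((sr R N)%:C * conjc alpha))).
  by rewrite /Amx tr_lemma cdot_ss HRaa.
have T3E : \tr (adjmx (dAmx M N theta) *m Amx M N theta *m Rx) = M%:R * (gamma1%:C * ((sr R N)%:C * alpha * z)).
  rewrite dAmxE /Amx tr_sum1.
  by rewrite (cdot_dss M theta) (cdot_ss M theta) mul0r add0r HRad.
have T2E : \tr (adjmx (dAmx M N theta) *m dAmx M N theta *m Rx) = (pi ^+ 2 * cos theta ^+ 2 * M%:R * (M%:R ^+ 2 - 1) / 12)%:C * (gamma1%:C * ((sr R N)%:C * alpha * ((sr R N)%:C * conjc alpha))) + M%:R * (gamma1%:C * (conjc z * z) + gamma2%:C * (cdot (dsteer N theta) (dsteer N theta) - conjc y * y)).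
  rewrite dAmxE tr_sum2.
  rewrite (cdot_ss M theta) (cdot_dss M theta) (cdot_sds M theta) (cdot_dd M theta) !mul0r addr0 add0r HRaa HRdd.
  done.
set X := gamma1%:C * ((sr R N)%:C * alpha * ((sr R N)%:C * conjc alpha)).
set B := (pi ^+ 2 * cos theta ^+ 2 * M%:R * (M%:R ^+ 2 - 1) / 12)%:C * X + M%:R * gamma2%:C * (cdot (dsteer N theta) (dsteer N theta) - conjc y * y).
have KE : M%:R * X * ((pi ^+ 2 * cos theta ^+ 2 * M%:R * (M%:R ^+ 2 - 1) / 12)%:C * X + M%:R * (gamma1%:C * (conjc z * z) + gamma2%:C * (cdot (dsteer N theta) (dsteer N theta) - conjc y * y)))
   - `|M%:R * (gamma1%:C * ((sr R N)%:C * alpha * z))| ^+ 2 = M%:R * X * B.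
  rewrite normsq cj_prod4 /B /X; ring.
have HX : X = (gamma1 * N%:R * cabs2 alpha)%:C.
  have e1 : ((sr R N)%:C * alpha * ((sr R N)%:C * conjc alpha)) = ((sr R N * sr R N)%:C) * (alpha * conjc alpha).
    rewrite rmorphM /=; ring.
  by rewrite /X e1 cabs2E sr_sq -!rmorphM mulrA.
set YYr := (S1 ^+ 2 + S2 ^+ 2) / (Ks - (N%:R)^-1 * (Ts ^+ 2 + Rs ^+ 2)).
have Hww : ww theta h = Ks - (N%:R)^-1 * (Ts ^+ 2 + Rs ^+ 2).
  apply: complexI.
  rewrite (ww_val theta h HN0) cdot_self (atilE N theta) cdotZl conjc_real cdot_a_h cjmul -rmorphB.
  congr (_%:C); rewrite exprVn expr2 sr_sq /Ks /Ts /Rs; ring.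
have Hw : cdot (wv theta h) (dsteer N theta) = cdot h (dsteer N theta).
  by rewrite /wv cdotBl cdotZl cdot_at_da mulr0 subr0.
have HYY : conjc y * y = YYr%:C.
  rewrite /y cdot_ht_v Hw (cdotC (dsteer N theta) h) cdot_da_h cjmul'.
  congr (_%:C); rewrite /YYr -Hww exprVn sqr_sqrtr ?ww_ge0 // /S1 /S2; by rewrite mulrC.
have HB : B = (gamma1 * nb2 * N%:R * cabs2 alpha + gamma2 * M%:R * (na2 - YYr))%:C.
  rewrite /B HX (cdot_dd N theta) HYY HB_alg; congr (_%:C); rewrite /nb2 /na2; ring.
move: Hden; unfold CRBden; cbv zeta; rewrite T1E T2E T3E KE => Hden.
rewrite HB cabs2C in Hden *.
have HX0 : gamma1%:C * ((sr R N)%:C * alpha * ((sr R N)%:C * conjc alpha)) = (gamma1 * N%:R * cabs2 alpha)%:C := HX.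
rewrite HX0 HX.
rewrite -/X HX in Hden.
exact: final_alg Hden.
Qed.
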